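(* Fix $t\in\{1,\dots,M\}$, corresponding to the pair $(i,j)$ with $C_t=C_{i,j}$, and let $z^*=(x^*,y^* )\in F(\mathcal{T}_t)$. Define $$r_t=\begin{cases}\min\Big\{d_{sep}(z^*,C_t),\ \dfrac{d_{sep}(z^*,C_t)+d_{esc}(z^*,C_t)}{2}\Big\}, & \text{if } |K_t(z^* )|=1,\\[2mm] \min\{g(x_i^*,x_j^*,w_i,w_j),\ g(y_i^*,y_j^*,h_i,h_j)\}, & \text{if } |K_t(z^* )|=2,\end{cases}$$ where $g(a,b,c,d)=|(a-b)+(c-d)/2|/\sqrt{2}$. Then every $z\in B(z^*,r_t)$ satisfies $K_t(z)\subseteq K_t(z^* )$.
   Context: Fix reals $W,H>0$, integers $N\ge N_m\ge 2$, and widths $w_i>0$, heights $h_i>0$ for $1\le i\le N_m$. Points of $\mathbb{R}^{2N}$ are written $z=(x,y)$ with $x=(x_1,\dots,x_N)$, $y=(y_1,\dots,y_N)$. For $1\le i\le N_m$ let $B_i^x=\{z: 0\le x_i\le W-w_i\}$, $B_i^y=\{z: 0\le y_i\le H-h_i\}$; for $i\neq j$ let $B_{i,j}=B_i^x\cap B_i^y\cap B_j^x\cap B_j^y$, $O^x_{i,j}=\{z: x_i+w_i\le x_j\}$, $O^y_{i,j}=\{z: y_i+h_i\le y_j\}$. Define the closed convex sets $C_{i,j,\mathsf{L}}=O^x_{i,j}\cap B_{i,j}$, $C_{i,j,\mathsf{R}}=O^x_{j,i}\cap B_{i,j}$, $C_{i,j,\mathsf{B}}=O^y_{i,j}\cap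 B_{i,j}$, $C_{i,j,\mathsf{A}}=O^y_{j,i}\cap B_{i,j}$ (assumed nonempty) and $C_{i,j}=C_{i,j,\mathsf{L}}\cup C_{i,j,\mathsf{R}}\cup C_{i,j,\mathsf{B}}\cup C_{i,j,\mathsf{A}}$. Enumerate the pairs $1\le i<j\le N_m$ by $t=1,\dots,M$ and write $C_t=C_{i,j}$, $C_{t,k}=C_{i,j,k}$. With the Euclidean norm and $\mathrm{d}(z,C)=\inf_{c\in C}\|z-c\|$: $\mathcal{P}_t(z)=\{c\in C_t:\|z-c\|=\mathrm{d}(z,C_t)\}$, $P_{t,k}(z)$ is the unique nearest point of $C_{t,k}$ to $z$; for a fixed $\lambda\in(0,2)$, $\mathcal{T}_t(z)=\{z+\lambda(p-z):p\in\mathcal{P}_t(z)\}$, $F(\mathcal{T}_t)=\{z: z\in\mathcal{T}_t(z)\}$. Active indices: $K_t(z)=\{k\in\{\mathsf{L},\mathsf{R},\mathsf{B},\mathsf{A}\}: P_{t,k}(z)\in\mathcal{P}_t(z)\}$ (for $z^*\in F(\mathcal{T}_t)$ one has $|K_t(z^* )|\in\{1,2\}$). $d_{esc}(z^*,C_t)=\inf\{\|z-z^*\| : z\notin C_{t,k}\text{ for some }k\in K_t(z^* )\}$; $d_{sep}(z^*,C_t)=\min\{\mathrm{d}(z^*,C_{t,k}) : k\notin K_t(z^* )\}$. $B(z,r)$ is the open Euclidean ball (empty if $r=0$). *)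

(* Defs.v *)
From mathcomp Require Import all_boot all_order all_algebra.
From mathcomp Require Import all_classical all_reals.
Set Implicit Arguments. Unset Strict Implicit. Unset Printing Implicit Defensive.
Import Order.TTheory GRing.Theory Num.Theory.
Local Open Scope classical_set_scope.
Local Open Scope ring_scope.

(* A point z = (x, y) of R^{2N}; coordinates are indexed by 'I_N (0-based). *)
Definition pt (R : realType) (N : nat) : Type := (('I_N -> R) * ('I_N -> R))%type.

Definition edist (R : realType) (N : nat) (z c : pt R N) : R :=
  Num.sqrt (\sum_(k < N) ((z.1 k - c.1 k) ^+ 2 + (z.2 k - c.2 k) ^+ 2)).

Definition dset (R : realType) (N : nat) (z : pt R N) (C : set (pt R N)) : R :=
  inf [set edist z c | c in C].

Inductive side := sL | sR | sB | sA.

Section Sets.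
Variables (R : realType) (N : nat) (W H : R) (w h : 'I_N -> R) (i j : 'I_N).

Definition Bx (l : 'I_N) : set (pt R N) := [set z | 0 <= z.1 l /\ z.1 l <= W - w l].
Definition By (l : 'I_N) : set (pt R N) := [set z | 0 <= z.2 l /\ z.2 l <= H - h l].
Definition Bij : set (pt R N) := Bx i `&` By i `&` Bx j `&` By j.
Definition Ox (a b : 'I_N) : set (pt R N) := [set z | z.1 a + w a <= z.1 b].
Definition Oy (a b : 'I_N) : set (pt R N) := [set z | z.2 a + h a <= z.2 b].

Definition Cside (k : side) : set (pt R N) :=
  match k with
  | sL => Ox i j `&` Bij
  | sR => Ox j i `&` Bij
  | sB => Oy i j `&` Bij
  | sA => Oy j i `&` Bij
  end.

Definition Cpair : set (pt R N) :=
  Cside sL `|` Cside sR `|` Cside sB `|` Cside sA.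

Definition Pset (z : pt R N) : set (pt R N) :=
  [set c | Cpair c /\ edist z c = dset z Cpair].

Definition is_Pk (k : side) (z p : pt R N) : Prop :=
  Cside k p /\ forall c, Cside k c -> edist z p <= edist z c.

Definition Kset (z : pt R N) : set side :=
  [set k | exists p, is_Pk k z p /\ Pset z p].

Definition relax (lam : R) (z p : pt R N) : pt R N :=
  (fun l => z.1 l + lam * (p.1 l - z.1 l), fun l => z.2 l + lam * (p.2 l - z.2 l)).

Definition Tset (lam : R) (z : pt R N) : set (pt R N) :=
  [set relax lam z p | p in Pset z].
Definition is_fixed (lam : R) (z : pt R N) : Prop := Tset lam z z.

Definition d_esc (zs : pt R N) : R :=
  inf [set edist z zs | z in [set z | exists k, Kset zs k /\ ~ Cside k z]].

Definition d_sep (zs : pt R N) : R :=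
  inf [set dset zs (Cside k) | k in ~` Kset zs].

End Sets.

Definition gfun (R : realType) (a b c d : R) : R :=
  `|(a - b) + (c - d) / 2| / Num.sqrt 2.

Definition has_card1 (K : set side) : Prop := exists k, K = [set k].
Definition has_card2 (K : set side) : Prop :=
  exists k1 k2, k1 <> k2 /\ K = [set k1; k2].

(* Main.v *)
Require Import Defs.
From mathcomp Require Import all_boot all_order all_algebra.
From mathcomp Require Import all_classical all_reals.
From mathcomp Require Import ring lra.
Import Order.TTheory GRing.Theory Num.Theory.
Local Open Scope classical_set_scope.
Local Open Scope ring_scope.

Section CoreS.

Variable R : realType.

Lemma coreUV_left (M S Us Vs Up Vp Uq Vq : R) :
  0 < M -> M <= Vs -> Vs <= Us -> Us + Vs <= S ->
  (Up - Us)^+2 + (Vp - Vs)^+2 < Vs^+2 -> Vq <= - M -> Uq - Vq <= S ->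
  exists Uc Vc : R, [/\ M <= Vc, Vc <= Uc, Uc + Vc <= S &
    (Up - Uc)^+2 + (Vp - Vc)^+2 < (Up - Uq)^+2 + (Vp - Vq)^+2].
Proof.
move=> M0 MVs VsUs UsS ball VqM UqS.
have Vs0 : 0 < Vs by lra.
have sq1 : 0 <= (Up - Us)^+2 by apply: sqr_ge0.
have sq2 : 0 <= (Vp - Vs)^+2 by apply: sqr_ge0.
have Vp0 : 0 < Vp.
  rewrite ltNge; apply/negP => hv.
  have : 0 <= - Vp * Vs by nra.
  nra.
have Up0 : 0 < Up.
  rewrite ltNge; apply/negP => hu.
  have : Vs <= Us - Up by lra.
  nra.
have [h1|h1] := lerP 0 (Uq + Vq).
  exists Uq, (- Vq); split; nra.
have [h2|h2] := lerP (2 * M) (Uq - Vq).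
  exists ((Uq - Vq) / 2), ((Uq - Vq) / 2); split; nra.
exists M, M; split; try nra.
have key : Up < M -> (M - Up)^+2 < 2 * M * Vp.
  move=> hUp.
  have h4 : (Vs - Up)^+2 <= (Us - Up)^+2 by nra.
  have h5 : 0 <= (Vs - M - Vp)^+2 by apply: sqr_ge0.
  have h6 : 0 <= (M - Up) * (Vs - M) by nra.
  nra.
have hX : 0 <= M - Uq + Vq + M by lra.
have hA : 0 <= - Vq - M by lra.
have hA2 : 0 <= (- Vq + M) * (- Vq - M) by nra.
have hV : 0 < (- Vq + M) * Vp by nra.
have [h3|h3] := lerP M Up.
  have : 0 <= (M - Uq) * (Up - M) by nra.
  nra.
have k := key h3.
have : 0 <= (M - Uq + Up - M)^+2 by apply: sqr_ge0.
have : 0 <= (- Vq - M) * Vp by nra.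
nra.
Qed.

Lemma coreUV (M S Us Vs Up Vp Uq Vq : R) :
  0 < M -> M <= Vs -> Vs <= Us -> Us + Vs <= S ->
  (Up - Us)^+2 + (Vp - Vs)^+2 < Vs^+2 -> Vq <= - M -> - (2 * Vq) <= S ->
  exists Uc Vc : R, [/\ M <= Vc, Vc <= Uc, Uc + Vc <= S &
    (Up - Uc)^+2 + (Vp - Vc)^+2 < (Up - Uq)^+2 + (Vp - Vq)^+2].
Proof.
move=> M0 MVs VsUs UsS ball VqM SVq.
have [h|h] := lerP (Uq - Vq) S.
  exact: (coreUV_left M S Us Vs Up Vp Uq Vq).
have ball' : (S - Up - (S - Us))^+2 + (Vp - Vs)^+2 < Vs^+2.
  have -> : S - Up - (S - Us) = - (Up - Us) by ring.
  by rewrite sqrrN.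
have [Uc [Vc [h1 h2 h3 h4]]] :=
  coreUV_left M S (S - Us) Vs (S-Up) Vp (S-Uq) Vq
   M0 MVs ltac:(lra) ltac:(lra) ball' VqM ltac:(lra).
exists (S - Uc), Vc; split; lra.
Qed.

Lemma core2D (W w1 w2 a1 a2 p1 p2 q1 q2 : R) :
 0 < w1 -> 0 < w2 -> 0 <= a1 -> a2 <= W - w2 -> a1 + w1 <= a2 ->
 0 <= q2 -> q1 <= W - w1 -> q2 + w2 <= q1 ->
 2 * ((p1 - a1)^+2 + (p2 - a2)^+2) < (a1 - a2 + (w1 - w2)/2)^+2 ->
 exists c1 c2, [/\ 0 <= c1, c1 <= W - w1, 0 <= c2, c2 <= W - w2 & c1 + w1 <= c2] /\
   (p1-c1)^+2 + (p2-c2)^+2 < (p1-q1)^+2 + (p2-q2)^+2.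
Proof.
move=> w10 w20 a10 a2W a12 q20 q1W q12 ball.
set d0 := (w1 - w2) / 2.
have e2 : forall x1 x2 y1 y2, (x1 - y1)^+2 + (x2 - y2)^+2
     = ((x1 + x2 - d0 - (y1 + y2 - d0))^+2 + (x2 - x1 - d0 - (y2 - y1 - d0))^+2) / 2.
  by move=> x1 x2 y1 y2; field.
have ball' : (p1 + p2 - d0 - (a1 + a2 - d0))^+2 + (p2 - p1 - d0 - (a2 - a1 - d0))^+2
     < (a2 - a1 - d0)^+2.
  move: ball; rewrite e2.
  have -> : a1 - a2 + (w1 - w2) / 2 = - (a2 - a1 - d0) by rewrite /d0; ring.
  rewrite sqrrN; lra.
have h0 : (w1 + w2)/2 <= a2 - a1 - d0 by rewrite /d0; lra.
have h00 : q2 - q1 - d0 <= - ((w1 + w2)/2) by rewrite /d0; lra.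
have h000 : - (2 * (q2 - q1 - d0)) <= 2 * (W - w2) - 2 * d0 by rewrite /d0; lra.
have [Uc [Vc [h1 h2 h3 h4]]] :=
  coreUV ((w1 + w2)/2) (2 * (W - w2) - 2 * d0)
    (a1 + a2 - d0) (a2 - a1 - d0)
    (p1 + p2 - d0) (p2 - p1 - d0)
    (q1 + q2 - d0) (q2 - q1 - d0)
    ltac:(lra) h0 ltac:(lra) ltac:(lra) ball' h00 h000.
exists ((Uc - Vc)/2), ((Uc + Vc)/2 + d0); split.
  split; rewrite /d0 in h1 h3 *; lra.
rewrite (e2 p1 p2 q1 q2).
have -> : (p1 - (Uc - Vc) / 2)^+2 + (p2 - ((Uc + Vc) / 2 + d0))^+2 = ((p1 + p2 - d0 - Uc)^+2 + (p2 - p1 - d0 - Vc)^+2)/2 by field.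
lra.
Qed.
End CoreS.

Set Implicit Arguments. Unset Strict Implicit.

Section Infra.
Variables (R : realType) (N : nat).
Implicit Types (z c p : pt R N).

Definition sqd z c : R := \sum_(k < N) ((z.1 k - c.1 k) ^+ 2 + (z.2 k - c.2 k) ^+ 2).

Lemma edistE z c : edist z c = Num.sqrt (sqd z c). Proof. by []. Qed.

Lemma sqd_ge0 z c : 0 <= sqd z c.
Proof. by apply: sumr_ge0 => k _; apply: addr_ge0; apply: sqr_ge0. Qed.

Lemma edist_ge0 z c : 0 <= edist z c.
Proof. exact: sqrtr_ge0. Qed.

Lemma sqd_sym z c : sqd z c = sqd c z.
Proof. by apply: eq_bigr => k _; rewrite -(sqrrN (z.1 k - _)) -(sqrrN (z.2 k - _)) !opprB. Qed.

Lemma edist_sym z c : edist z c = edist c z.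
Proof. by rewrite !edistE sqd_sym. Qed.

Lemma edist_sqr z c : edist z c ^+ 2 = sqd z c.
Proof. by rewrite edistE sqr_sqrtr // sqd_ge0. Qed.

Lemma edist0 z c : edist z c = 0 -> forall k, z.1 k = c.1 k /\ z.2 k = c.2 k.
Proof.
move=> h k.
have h2 : sqd z c = 0 by rewrite -edist_sqr h expr0n.
have e := @psumr_eq0P R 'I_N xpredT (fun k => (z.1 k - c.1 k) ^+ 2 + (z.2 k - c.2 k) ^+ 2)
  (fun l _ => addr_ge0 (sqr_ge0 _) (sqr_ge0 _)) h2 k isT.
simpl in e.
have a1 := sqr_ge0 (z.1 k - c.1 k).
have a2 := sqr_ge0 (z.2 k - c.2 k).
have b1 : (z.1 k - c.1 k) ^+ 2 = 0 by lra.
have b2 : (z.2 k - c.2 k) ^+ 2 = 0 by lra.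
move/eqP: b1; rewrite sqrf_eq0 subr_eq0 => /eqP ->.
by move/eqP: b2; rewrite sqrf_eq0 subr_eq0 => /eqP ->.
Qed.

Lemma edist_lt (z a b : pt R N) : sqd z a < sqd z b -> edist z a < edist z b.
Proof.
move=> h; rewrite !edistE ltr_sqrt //.
exact: le_lt_trans (sqd_ge0 z a) h.
Qed.

Lemma edist_lt_sq (z a : pt R N) (X : R) : 0 <= X -> edist z a < X -> sqd z a < X ^+ 2.
Proof.
move=> X0 h; rewrite -edist_sqr.
have := edist_ge0 z a; nra.
Qed.

Lemma sum2 (F : 'I_N -> R) (a b : 'I_N) : a != b ->
  \sum_(k < N) F k = F a + F b + \sum_(k < N | (k != a) && (k != b)) F k.
Proof.
move=> ab.
rewrite (bigD1 a) //= (bigD1 b) /=; last by rewrite eq_sym.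
by rewrite addrA.
Qed.


Lemma cs_tri (F1 F2 G1 G2 : 'I_N -> R) :
  Num.sqrt (\sum_(k < N) ((F1 k + G1 k)^+2 + (F2 k + G2 k)^+2)) <=
  Num.sqrt (\sum_(k < N) (F1 k ^+2 + F2 k ^+2)) + Num.sqrt (\sum_(k < N) (G1 k ^+2 + G2 k ^+2)).
Proof.
set A := \sum_(k < N) (F1 k ^+2 + F2 k ^+2).
set B := \sum_(k < N) (G1 k ^+2 + G2 k ^+2).
set C := \sum_(k < N) (F1 k * G1 k + F2 k * G2 k).
have E : forall t, \sum_(k < N) ((F1 k + t * G1 k)^+2 + (F2 k + t * G2 k)^+2)
    = A + (2 * t) * C + t ^+ 2 * B.
  move=> t; rewrite /A /B /C !mulr_sumr -!big_split; apply: eq_bigr => k _ /=; ring.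
have quad : forall t, 0 <= A + (2 * t) * C + t ^+ 2 * B.
  move=> t; rewrite -E; apply: sumr_ge0 => k _; apply: addr_ge0; apply: sqr_ge0.
have A0 : 0 <= A by apply: sumr_ge0 => k _; apply: addr_ge0; apply: sqr_ge0.
have B0 : 0 <= B by apply: sumr_ge0 => k _; apply: addr_ge0; apply: sqr_ge0.
have CS : C ^+ 2 <= A * B.
  have [Bp|Bz] := boolP (0 < B).
    have h := quad (- C / B).
    have e : (A + 2 * (- C / B) * C + (- C / B) ^+ 2 * B) * B = A * B - C ^+ 2.
      by field; rewrite gt_eqF.
    have : 0 <= (A + 2 * (- C / B) * C + (- C / B) ^+ 2 * B) * B by apply: mulr_ge0 => //; apply: ltW.
    rewrite e; lra.
  have B00 : B = 0 by move: Bz; rewrite lt_def negb_and negbK B0 orbF => /eqP.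
  have [C0|C0] := eqVneq C 0.
    by rewrite C0 B00 expr0n /= mulr0.
  have h := quad (- (A + 1) / (2 * C)).
  have e : A + 2 * (- (A + 1) / (2 * C)) * C + (- (A + 1) / (2 * C)) ^+ 2 * B = -1.
    by rewrite B00 mulr0 addr0; field.
  by move: h; rewrite e; lra.
have sA := sqrtr_ge0 A; have sB := sqrtr_ge0 B.
have sA2 : Num.sqrt A ^+ 2 = A by rewrite sqr_sqrtr.
have sB2 : Num.sqrt B ^+ 2 = B by rewrite sqr_sqrtr.
have CleS : C <= Num.sqrt A * Num.sqrt B.
  have s0 : 0 <= Num.sqrt A * Num.sqrt B by apply: mulr_ge0.
  have : C ^+ 2 <= (Num.sqrt A * Num.sqrt B) ^+ 2 by rewrite exprMn sA2 sB2.
  nra.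
have -> : \sum_(k < N) ((F1 k + G1 k)^+2 + (F2 k + G2 k)^+2) = A + 2 * C + B.
  rewrite /A /B /C mulr_sumr -!big_split; apply: eq_bigr => k _ /=; ring.
rewrite -(ger0_norm (addr_ge0 sA sB)) -sqrtr_sqr ler_sqrt; last by apply: sqr_ge0.
nra.
Qed.

Lemma edist_tri (a b c : pt R N) : edist a c <= edist a b + edist b c.
Proof.
rewrite !edistE /sqd.
have -> : \sum_(k < N) ((a.1 k - c.1 k) ^+ 2 + (a.2 k - c.2 k) ^+ 2) =
  \sum_(k < N) (((a.1 k - b.1 k) + (b.1 k - c.1 k)) ^+ 2 + ((a.2 k - b.2 k) + (b.2 k - c.2 k)) ^+ 2).
  by apply: eq_bigr => k _; rewrite !subrKA.
exact: cs_tri.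
Qed.


Lemma edist0_eq (a b : pt R N) : edist a b = 0 -> a = b.
Proof.
move=> /edist0 h; case: a b h => a1 a2 [b1 b2] /= h.
congr pair; apply: funext => l; by have [] := h l.
Qed.

Lemma edist_self (a : pt R N) : edist a a = 0.
Proof.
rewrite edistE /sqd big1 ?sqrtr0 // => k _; by rewrite !subrr expr0n /= addr0.
Qed.

Lemma edist_scale (a b z zs : pt R N) (kap : R) :
  (forall l, a.1 l - b.1 l = kap * (z.1 l - zs.1 l) /\ a.2 l - b.2 l = kap * (z.2 l - zs.2 l)) ->
  edist a b = `|kap| * edist z zs.
Proof.
move=> h; rewrite !edistE.
have -> : sqd a b = kap ^+ 2 * sqd z zs.
  rewrite /sqd mulr_sumr; apply: eq_bigr => l _.
  have [-> ->] := h l; ring.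
by rewrite sqrtrM ?sqr_ge0 // sqrtr_sqr.
Qed.

Lemma dset_le (z : pt R N) (C : set (pt R N)) c : C c -> dset z C <= edist z c.
Proof.
move=> Cc; rewrite /dset; apply: ge_inf; last by exists c.
by exists 0 => y [c0 _ <-]; apply: edist_ge0.
Qed.

Lemma dset_ge0 (z : pt R N) (C : set (pt R N)) : C !=set0 -> 0 <= dset z C.
Proof.
move=> [c Cc]; rewrite /dset; apply: lb_le_inf; first by exists (edist z c), c.
by move=> y [c0 _ <-]; apply: edist_ge0.
Qed.

End Infra.

Section Upd.
Variables (R : realType) (N : nat).

Definition updf (f : 'I_N -> R) (a b : 'I_N) (x y : R) : 'I_N -> R :=
  fun k => if k == a then x else if k == b then y else f k.

Arguments updf : simpl never.

Lemma updf_a f a b x y : updf f a b x y a = x.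
Proof. by rewrite /updf eqxx. Qed.
Lemma updf_b f a b x y : a != b -> updf f a b x y b = y.
Proof. by move=> ab; rewrite /updf eq_sym (negbTE ab) eqxx. Qed.

Lemma sqd_upd1 (z p : pt R N) a b x y : a != b ->
  sqd z (updf p.1 a b x y, p.2) - sqd z p =
  ((z.1 a - x)^+2 + (z.1 b - y)^+2) - ((z.1 a - p.1 a)^+2 + (z.1 b - p.1 b)^+2).
Proof.
move=> ab; rewrite /sqd (sum2 _ ab) (sum2 (fun k => (z.1 k - p.1 k) ^+ 2 + (z.2 k - p.2 k) ^+ 2) ab) /=.
rewrite updf_a updf_b //.
have -> : \sum_(k < N | (k != a) && (k != b))
      ((z.1 k - updf p.1 a b x y k) ^+ 2 + (z.2 k - p.2 k) ^+ 2) =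
   \sum_(k < N | (k != a) && (k != b)) ((z.1 k - p.1 k) ^+ 2 + (z.2 k - p.2 k) ^+ 2).
  apply: eq_bigr => k /andP [ka kb]; by rewrite /updf (negbTE ka) (negbTE kb).
ring.
Qed.

Lemma sqd_upd2 (z p : pt R N) a b x y : a != b ->
  sqd z (p.1, updf p.2 a b x y) - sqd z p =
  ((z.2 a - x)^+2 + (z.2 b - y)^+2) - ((z.2 a - p.2 a)^+2 + (z.2 b - p.2 b)^+2).
Proof.
move=> ab; rewrite /sqd (sum2 _ ab) (sum2 (fun k => (z.1 k - p.1 k) ^+ 2 + (z.2 k - p.2 k) ^+ 2) ab) /=.
rewrite updf_a updf_b //.
have -> : \sum_(k < N | (k != a) && (k != b))
      ((z.1 k - p.1 k) ^+ 2 + (z.2 k - updf p.2 a b x y k) ^+ 2) =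
   \sum_(k < N | (k != a) && (k != b)) ((z.1 k - p.1 k) ^+ 2 + (z.2 k - p.2 k) ^+ 2).
  apply: eq_bigr => k /andP [ka kb]; by rewrite /updf (negbTE ka) (negbTE kb).
ring.
Qed.

Lemma part_le (z zs : pt R N) a b : a != b ->
  ((z.1 a - zs.1 a)^+2 + (z.1 b - zs.1 b)^+2) <= sqd z zs /\
  ((z.2 a - zs.2 a)^+2 + (z.2 b - zs.2 b)^+2) <= sqd z zs.
Proof.
move=> ab; rewrite /sqd (sum2 _ ab).
have r0 : 0 <= \sum_(k < N | (k != a) && (k != b)) ((z.1 k - zs.1 k) ^+ 2 + (z.2 k - zs.2 k) ^+ 2).
  by apply: sumr_ge0 => k _; apply: addr_ge0; apply: sqr_ge0.
have := sqr_ge0 (z.1 a - zs.1 a); have := sqr_ge0 (z.1 b - zs.1 b).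
have := sqr_ge0 (z.2 a - zs.2 a); have := sqr_ge0 (z.2 b - zs.2 b).
move=> *; split; lra.
Qed.

Lemma gfun_sq (X : R) : (`|X| / Num.sqrt 2) ^+ 2 = X ^+ 2 / 2.
Proof. by rewrite expr_div_n real_normK ?num_real // sqr_sqrtr. Qed.

Lemma ball_part (z zs : pt R N) a b (X : R) : a != b ->
  edist z zs < `|X| / Num.sqrt 2 ->
  2 * ((z.1 a - zs.1 a)^+2 + (z.1 b - zs.1 b)^+2) < X ^+ 2 /\
  2 * ((z.2 a - zs.2 a)^+2 + (z.2 b - zs.2 b)^+2) < X ^+ 2.
Proof.
move=> ab hlt.
have h := edist_lt_sq (divr_ge0 (normr_ge0 X) (sqrtr_ge0 2)) hlt.
rewrite gfun_sq in h.
have [h1 h2] := part_le z zs ab.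
split; lra.
Qed.

Lemma gfun_sym (a b c d : R) : gfun a b c d = gfun b a d c.
Proof.
rewrite /gfun; congr (_ / _).
by rewrite -normrN; congr `|_|; field.
Qed.

End Upd.
Arguments updf : simpl never.

Section Main.
Variables (R : realType) (N : nat) (W H lam : R) (w h : 'I_N -> R) (i j : 'I_N).
Local Notation Cs := (Cside W H w h i j).
Local Notation K := (Kset W H w h i j).
Local Notation Cp := (Cpair W H w h i j).

Lemma Pset_min (z p c : pt R N) : Pset W H w h i j z p -> Cp c -> edist z p <= edist z c.
Proof. by move=> [_ ->] Cc; apply: dset_le. Qed.

Lemma fixed_eq (zs : pt R N) : 0 < lam -> is_fixed W H w h i j lam zs ->
  exists p, Pset W H w h i j zs p /\ p = zs.
Proof.
move=> l0 [p Pp e]; exists p; split => //.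
move: e; case: p Pp => p1 p2 Pp; case: zs Pp => z1 z2 Pp e.
congr pair; apply: funext => l.
- have := congr1 (fun u => u.1 l) e => /= e1.
  have : lam * (p1 l - z1 l) = 0 by lra.
  move/eqP; rewrite mulf_eq0 gt_eqF //= subr_eq0 => /eqP //.
- have := congr1 (fun u => u.2 l) e => /= e1.
  have : lam * (p2 l - z2 l) = 0 by lra.
  move/eqP; rewrite mulf_eq0 gt_eqF //= subr_eq0 => /eqP //.
Qed.

Lemma fixed_dset0 (zs : pt R N) : 0 < lam -> is_fixed W H w h i j lam zs ->
  dset zs Cp = 0.
Proof.
move=> l0 fx; have [p [[_ pE] e]] := fixed_eq l0 fx; subst p.
by rewrite -pE edist_self.
Qed.

Lemma K_in (zs : pt R N) k : 0 < lam -> is_fixed W H w h i j lam zs -> K zs k -> Cs k zs.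
Proof.
move=> l0 fx [p [[Ck _] [_ pE]]].
rewrite (fixed_dset0 l0 fx) in pE.
by rewrite (edist0_eq pE).
Qed.


Lemma excl_x (zs z p : pt R N) (a b : 'I_N) : a != b -> 0 < w a -> 0 < w b ->
 0 <= zs.1 a -> zs.1 b <= W - w b -> zs.1 a + w a <= zs.1 b ->
 0 <= p.1 b -> p.1 a <= W - w a -> p.1 b + w b <= p.1 a ->
 edist z zs < gfun (zs.1 a) (zs.1 b) (w a) (w b) ->
 exists x y, [/\ 0 <= x, x <= W - w a, 0 <= y, y <= W - w b & x + w a <= y] /\
   edist z (updf p.1 a b x y, p.2) < edist z p.
Proof.
move=> ab wa wb h1 h2 h3 h4 h5 h6 hlt.
have [hb _] := ball_part ab hlt.
have [x [y [hc hd]]] := @core2D R W (w a) (w b) (zs.1 a) (zs.1 b) (z.1 a) (z.1 b) (p.1 a) (p.1 b) wa wb h1 h2 h3 h4 h5 h6 hb.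
exists x, y; split => //.
apply: edist_lt; have := sqd_upd1 z p x y ab; lra.
Qed.

Lemma excl_y (zs z p : pt R N) (a b : 'I_N) : a != b -> 0 < h a -> 0 < h b ->
 0 <= zs.2 a -> zs.2 b <= H - h b -> zs.2 a + h a <= zs.2 b ->
 0 <= p.2 b -> p.2 a <= H - h a -> p.2 b + h b <= p.2 a ->
 edist z zs < gfun (zs.2 a) (zs.2 b) (h a) (h b) ->
 exists x y, [/\ 0 <= x, x <= H - h a, 0 <= y, y <= H - h b & x + h a <= y] /\
   edist z (p.1, updf p.2 a b x y) < edist z p.
Proof.
move=> ab wa wb h1 h2 h3 h4 h5 h6 hlt.
have [_ hb] := ball_part ab hlt.
have [x [y [hc hd]]] := @core2D R H (h a) (h b) (zs.2 a) (zs.2 b) (z.2 a) (z.2 b) (p.2 a) (p.2 b) wa wb h1 h2 h3 h4 h5 h6 hb.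
exists x, y; split => //.
apply: edist_lt; have := sqd_upd2 z p x y ab; lra.
Qed.

Lemma exLR (zs z p : pt R N) : i != j -> 0 < w i -> 0 < w j ->
  Cs sL zs -> Cs sR p -> edist z zs < gfun (zs.1 i) (zs.1 j) (w i) (w j) ->
  (forall c, Cp c -> edist z p <= edist z c) -> False.
Proof.
move=> ij wi wj [Oz [[[[z1 z2] zy] [z3 z4]] zy']] [Op [[[[p1 p2] [py1 py2]] [p3 p4]] [py3 py4]]] hlt hmin.
have [x [y [[c1 c2 c3 c4 c5] hd]]] := excl_x ij wi wj z1 z4 Oz p3 p2 Op hlt.
have Cc : Cs sL (updf p.1 i j x y, p.2).
  split; first by hnf; rewrite /= updf_a updf_b.
  split; [split; [split|]|]; hnf; try split; rewrite /= ?updf_a ?updf_b //.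
have := hmin _ (or_introl (or_introl (or_introl Cc))).
by rewrite leNgt hd.
Qed.

Lemma exRL (zs z p : pt R N) : i != j -> 0 < w i -> 0 < w j ->
  Cs sR zs -> Cs sL p -> edist z zs < gfun (zs.1 i) (zs.1 j) (w i) (w j) ->
  (forall c, Cp c -> edist z p <= edist z c) -> False.
Proof.
move=> ij wi wj [Oz [[[[z1 z2] zy] [z3 z4]] zy']] [Op [[[[p1 p2] [py1 py2]] [p3 p4]] [py3 py4]]] hlt hmin.
have ji : j != i by rewrite eq_sym.
rewrite gfun_sym in hlt.
have [x [y [[c1 c2 c3 c4 c5] hd]]] := excl_x ji wj wi z3 z2 Oz p1 p4 Op hlt.
have Cc : Cs sR (updf p.1 j i x y, p.2).
  split; first by hnf; rewrite /= updf_a updf_b.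
  split; [split; [split|]|]; hnf; try split; rewrite /= ?updf_a ?updf_b //.
have := hmin _ (or_introl (or_introl (or_intror Cc))).
by rewrite leNgt hd.
Qed.

Lemma exBA (zs z p : pt R N) : i != j -> 0 < h i -> 0 < h j ->
  Cs sB zs -> Cs sA p -> edist z zs < gfun (zs.2 i) (zs.2 j) (h i) (h j) ->
  (forall c, Cp c -> edist z p <= edist z c) -> False.
Proof.
move=> ij wi wj [Oz [[[zx [z1 z2]] zx'] [z3 z4]]] [Op [[[[px1 px2] [p1 p2]] [px3 px4]] [p3 p4]]] hlt hmin.
have [x [y [[c1 c2 c3 c4 c5] hd]]] := excl_y ij wi wj z1 z4 Oz p3 p2 Op hlt.
have Cc : Cs sB (p.1, updf p.2 i j x y).
  split; first by hnf; rewrite /= updf_a updf_b.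
  split; [split; [split|]|]; hnf; try split; rewrite /= ?updf_a ?updf_b //.
have := hmin _ (or_introl (or_intror Cc)).
by rewrite leNgt hd.
Qed.

Lemma exAB (zs z p : pt R N) : i != j -> 0 < h i -> 0 < h j ->
  Cs sA zs -> Cs sB p -> edist z zs < gfun (zs.2 i) (zs.2 j) (h i) (h j) ->
  (forall c, Cp c -> edist z p <= edist z c) -> False.
Proof.
move=> ij wi wj [Oz [[[zx [z1 z2]] zx'] [z3 z4]]] [Op [[[[px1 px2] [p1 p2]] [px3 px4]] [p3 p4]]] hlt hmin.
have ji : j != i by rewrite eq_sym.
rewrite gfun_sym in hlt.
have [x [y [[c1 c2 c3 c4 c5] hd]]] := excl_y ji wj wi z3 z2 Oz p1 p4 Op hlt.
have Cc : Cs sA (p.1, updf p.2 j i x y).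
  split; first by hnf; rewrite /= updf_a updf_b.
  split; [split; [split|]|]; hnf; try split; rewrite /= ?updf_a ?updf_b //.
have := hmin _ (or_intror Cc).
by rewrite leNgt hd.
Qed.


Lemma Cs_Cp k (c : pt R N) : Cs k c -> Cp c.
Proof.
case: k => hc; [left; left; left | left; left; right | left; right | right]; exact hc.
Qed.

Lemma card1_case (zs z : pt R N) (k0 : side) : 0 < lam -> (forall k, Cs k !=set0) ->
  is_fixed W H w h i j lam zs -> K zs = [set k0] ->
  edist z zs < Num.min (d_sep W H w h i j zs) ((d_sep W H w h i j zs + d_esc W H w h i j zs) / 2) ->
  K z `<=` K zs.
Proof.
move=> l0 hne fx Ke hz k [p [[Ckp _] Pp]].
rewrite Ke; have [//|nk] := pselect (k = k0).
exfalso.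
have Cz0 : Cs k0 zs by apply: (K_in l0 fx); rewrite Ke.
have nKk : ~ K zs k by rewrite Ke.
set ds := d_sep W H w h i j zs; set de := d_esc W H w h i j zs.
have hsep : ds <= dset zs (Cs k).
  rewrite /ds /d_sep; apply: ge_inf; last by exists k.
  by exists 0 => y [k' _ <-]; apply: dset_ge0.
have h1 : dset zs (Cs k) <= edist zs p by apply: dset_le.
have h2 := edist_tri zs z p.
have hmin := Pset_min Pp.
set r := edist z zs.
have rs : edist zs z = r by rewrite /r edist_sym.
rewrite rs in h2.
have [hz1 hz2] : r < ds /\ r < (ds + de) / 2 by move: hz; rewrite lt_min => /andP [].
have r0 : 0 <= r by apply: edist_ge0.
have esc : forall c, edist c zs < de -> Cs k0 c.
  move=> c hc; have [//|nc] := pselect (Cs k0 c).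
  have : de <= edist c zs.
    rewrite /de /d_esc; apply: ge_inf; last by exists c => //; exists k0; split => //; rewrite Ke.
    by exists 0 => y [c' _ <-]; apply: edist_ge0.
  by rewrite leNgt hc.
have [small|big] := ltrP (2 * r) ds.
  have := hmin zs (Cs_Cp Cz0); rewrite -/r; lra.
set lo := 2 * r - ds.
set mi := Num.min de r.
have lode : lo < de by rewrite /lo; lra.
have lor : lo < r by rewrite /lo; lra.
have lomi : lo < mi by rewrite /mi lt_min lode lor.
have mile : mi <= r by rewrite /mi ge_min lexx orbT.
have mide : mi <= de by rewrite /mi ge_min lexx.
set tau := (lo + mi) / 2.
have rpos : 0 < r by lra.
have lo0 : 0 <= lo by rewrite /lo; lra.
set th := tau / r.
have thr : th * r = tau by rewrite /th divfK // gt_eqF.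
have th0 : 0 < th by rewrite /th divr_gt0 // /tau; lra.
have th1 : th < 1 by rewrite /th ltr_pdivrMr // mul1r /tau; lra.
pose c : pt R N := (fun l => zs.1 l + th * (z.1 l - zs.1 l), fun l => zs.2 l + th * (z.2 l - zs.2 l)).
have ec1 : edist c zs = `|th| * r.
  by apply: edist_scale => l; rewrite /c /=; split; ring.
rewrite ger0_norm in ec1; last by apply: ltW.
have ec2 : edist z c = `|1 - th| * r.
  by apply: edist_scale => l; rewrite /c /=; split; ring.
rewrite ger0_norm in ec2; last by lra.
have Cc : Cs k0 c by apply: esc; rewrite ec1 thr /tau; lra.
have := hmin c (Cs_Cp Cc); rewrite ec2.
have : (1 - th) * r = r - tau by rewrite mulrBl mul1r thr.
move=> -> hle.
have elo : lo = 2 * r - ds by [].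
have etau : tau = (lo + mi) / 2 by [].
lra.
Qed.

Lemma incLR (zs : pt R N) : 0 < w i -> 0 < w j -> Cs sL zs -> Cs sR zs -> False.
Proof. by move=> wi wj [o1 _] [o2 _]; move: o1 o2; rewrite /Ox /=; lra. Qed.
Lemma incBA (zs : pt R N) : 0 < h i -> 0 < h j -> Cs sB zs -> Cs sA zs -> False.
Proof. by move=> wi wj [o1 _] [o2 _]; move: o1 o2; rewrite /Oy /=; lra. Qed.

Lemma card2_case (zs z : pt R N) (k1 k2 : side) : 0 < lam -> i != j ->
  0 < w i -> 0 < w j -> 0 < h i -> 0 < h j ->
  is_fixed W H w h i j lam zs -> k1 <> k2 -> K zs = [set k1; k2] ->
  edist z zs < Num.min (gfun (zs.1 i) (zs.1 j) (w i) (w j)) (gfun (zs.2 i) (zs.2 j) (h i) (h j)) ->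
  K z `<=` K zs.
Proof.
move=> l0 ij wi wj hi hj fx k12 Ke hz k [p [[Ckp _] Pp]].
rewrite Ke; have [//|nk] := pselect (k = k1 \/ k = k2).
exfalso.
have C1 : Cs k1 zs by apply: (K_in l0 fx); rewrite Ke; left.
have C2 : Cs k2 zs by apply: (K_in l0 fx); rewrite Ke; right.
have hmin := Pset_min Pp.
have [hx hy] : edist z zs < gfun (zs.1 i) (zs.1 j) (w i) (w j) /\
               edist z zs < gfun (zs.2 i) (zs.2 j) (h i) (h j).
  by move: hz; rewrite lt_min => /andP [].
move: k1 k2 k k12 Ke nk C1 C2 Ckp Pp hmin.
case; case; case => k12 Ke nk C1 C2 Ckp Pp hmin;
  try (by exfalso; apply: nk; auto);
  try (by case: k12);
  try (by case: (incLR wi wj C1 C2));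
  try (by case: (incLR wi wj C2 C1));
  try (by case: (incBA hi hj C1 C2));
  try (by case: (incBA hi hj C2 C1));
  first [ exact: (exLR ij wi wj C1 Ckp hx hmin) | exact: (exLR ij wi wj C2 Ckp hx hmin)
        | exact: (exRL ij wi wj C1 Ckp hx hmin) | exact: (exRL ij wi wj C2 Ckp hx hmin)
        | exact: (exBA ij hi hj C1 Ckp hy hmin) | exact: (exBA ij hi hj C2 Ckp hy hmin)
        | exact: (exAB ij hi hj C1 Ckp hy hmin) | exact: (exAB ij hi hj C2 Ckp hy hmin) ].
Qed.

End Main.

Theorem mainTheorem7 (R : realType) (N Nm : nat) (W H lam : R)
  (w h : 'I_N -> R) (i j : 'I_N)
  (hW : 0 < W) (hH : 0 < H) (hNm : (2 <= Nm)%N) (hNNm : (Nm <= N)%N)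
  (hw : forall l : 'I_N, (l < Nm)%N -> 0 < w l)
  (hh : forall l : 'I_N, (l < Nm)%N -> 0 < h l)
  (hlam : 0 < lam /\ lam < 2)
  (hij : (i < j)%N) (hjNm : (j < Nm)%N)
  (hne : forall k : side, Cside W H w h i j k !=set0) :
  forall zs : pt R N, is_fixed W H w h i j lam zs ->
  (has_card1 (Kset W H w h i j zs) ->
     forall z : pt R N,
       edist z zs < Num.min (d_sep W H w h i j zs)
                      ((d_sep W H w h i j zs + d_esc W H w h i j zs) / 2) ->
       Kset W H w h i j z `<=` Kset W H w h i j zs) /\
  (has_card2 (Kset W H w h i j zs) ->
     forall z : pt R N,
       edist z zs < Num.min (gfun (zs.1 i) (zs.1 j) (w i) (w j))
                            (gfun (zs.2 i) (zs.2 j) (h i) (h j)) ->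
       Kset W H w h i j z `<=` Kset W H w h i j zs).
Proof.
move=> zs fx.
have [l0 _] := hlam.
have ij : i != j by apply/eqP => e; move: hij; rewrite e ltnn.
have iNm : (i < Nm)%N by apply: ltn_trans hij hjNm.
have wi := hw i iNm; have wj := hw j hjNm.
have hi := hh i iNm; have hj := hh j hjNm.
split.
- move=> [k0 Ke] z hz; exact: (card1_case l0 hne fx Ke hz).
- move=> [k1 [k2 [k12 Ke]]] z hz; exact: (card2_case l0 ij wi wj hi hj fx k12 Ke hz).
Qed.
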